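(* For any realization of a run of Algorithm 4 (described in the context) under the standing assumption, the number of unsuccessful iterations performed before termination is either zero or else satisfies \[ |\mathcal{U}|\ \le\ \Big\lfloor 1+\log_{\gamma_1}\Big(\tfrac{3(1-\eta)}{2L_H\delta_{\max}}\Big)+\log_{\gamma_1}(\epsilon_H)\Big\rfloor\,(|\mathcal{S}|+1). \]
   Context: Let $f:\mathbb{R}^n\to\mathbb{R}$ with gradient $g=\nabla f$ and Hessian $H=\nabla^2f$; $\|\cdot\|$ is the Euclidean norm, $\lambda_{\min}$ the smallest eigenvalue, $\mathbb{S}^n$ the real symmetric $n\times n$ matrices. Write $f_k=f(x_k)$, $g_k=g(x_k)$, $H_k=H(x_k)$, $m_k(x)=f_k+g_k^T(x-x_k)+\tfrac12(x-x_k)^TH_k(x-x_k)$. Exact arithmetic is assumed. Algorithm 2 (truncated CG; inputs nonzero $g$, $H\in\mathbb{S}^n$, $\epsilon>0$, $\delta>0$, $\zeta\in(0,1)$, flag capCG, and $M\ge\|H\|$): $k_{\max}=\min\{n,\tfrac12\sqrt{\kappa}\ln(4\kappa^{3/2}/\zeta)\}$ with $\kappa=(M+2\epsilon)/\epsilon$ if capCG is true, else $k_{\max}=n$. Set $y_0=0,r_0=g,p_0=-g,j=0$. While $j<k_{\max}$: if $p_j^T(H+2\epsilon I)p_j\le\epsilon\|p_j\|^2$, return $s=y_j+\sigma p_j$ with $\sigma\ge0$, $\|s\|=\delta$, flag BND-NEG; set $\alpha_j=\|r_j\|^2/(p_j^T(H+2\epsilon I)p_j)$, $y_{j+1}=y_j+\alpha_jp_j$;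 if $\|y_{j+1}\|\ge\delta$, return $s=y_j+\sigma p_j$ with $\sigma\ge0$, $\|s\|=\delta$, flag BND-NORM; set $r_{j+1}=r_j+\alpha_j(H+2\epsilon I)p_j$; if $\|r_{j+1}\|\le\tfrac\zeta2\min\{\|g\|,\epsilon\|y_{j+1}\|\}$, return $s=y_{j+1}$, flag INT-RES; set $\beta_{j+1}=\|r_{j+1}\|^2/\|r_j\|^2$, $p_{j+1}=-r_{j+1}+\beta_{j+1}p_j$, $j\leftarrow j+1$. On loop exit return $s=y_j$, flag INT-MAX. Algorithm 3 (minimum eigenvalue oracle, MEO; inputs $g$, $H\in\mathbb{S}^n$, $\epsilon>0$, $\delta>0$, $\xi\in(0,1)$, $M\ge\|H\|$): a possibly randomized procedure that either returns $s=\pm\delta v$ with $\|v\|=1$, $v^THv\le-\epsilon/2$, satisfying $g^Ts\le0$, $s^THs\le-\tfrac12\epsilon\|s\|^2$, $\|s\|=\delta$, or returns an indication that $H\succeq-\epsilon I$. Algorithm 4 (inexact trust-region Newton-CG). Inputs: $\epsilon_g,\epsilon_H>0$; $\gamma_1\in(0,1)$, $\gamma_2\ge1$, $\psi\in(1/\gamma_2,1]$; $x_0$; $\delta_0>0$; $\delta_{\max}\ge\delta_0$; $\eta\in(0,1)$; $\zeta\in(0,1)$; $\xi\in[0,1)$; capCG; $M\ge L_g$. For $k=0,1,\dots$: evaluate $g_k,H_k$. If $g_k\ne0$, call Algorithm 2 with $(g_k,H_k,\epsilon_H,\delta_k,\zeta,\text{capCG},M)$ obtaining $s_k^{CG}$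 and flag outCG; else set $s_k^{CG}=0$, outCG$=$INT-RES. If outCG$\in\{$BND-NEG, BND-NORM$\}$ or ($\|g_k\|>\epsilon_g$ and outCG$=$INT-RES), set $s_k=s_k^{CG}$. Otherwise call Algorithm 3 with $(g_k,H_k,\epsilon_H,\delta_k,\xi,M)$; if it indicates $H_k\succeq-\epsilon_HI$, return $x_k$ (terminate), else take its output as $s_k$. Set $\rho_k=\frac{f_k-f(x_k+s_k)}{m_k(x_k)-m_k(x_k+s_k)}$. If $\rho_k\ge\eta$: $x_{k+1}=x_k+s_k$ and $\delta_{k+1}=\min\{\gamma_2\delta_k,\delta_{\max}\}$ if $\|s_k\|\ge\psi\delta_k$, else $\delta_{k+1}=\delta_k$. If $\rho_k<\eta$: $x_{k+1}=x_k$, $\delta_{k+1}=\gamma_1\|s_k\|$. $\mathcal{K}$ is the set of indices $k$ such that iteration $k$ is completed without termination (for the given realization); $\mathcal{S}=\{k\in\mathcal{K}:\rho_k\ge\eta\}$, $\mathcal{U}=\{k\in\mathcal{K}:\rho_k<\eta\}$. Standing assumption: $\{f_k\}$ is bounded below by some $f_{\rm low}\in\mathbb{R}$, and all segments $[x_k,x_k+s_k]$ lie in an open set on which $f$ is twice continuously differentiable with gradient Lipschitz with constant $L_g>0$ and Hessian Lipschitz with constant $L_H>0$. *)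

(* Defs.v *)
From HB Require Import structures.
From mathcomp Require Import all_boot all_order all_algebra.
From mathcomp Require Import all_classical all_reals all_analysis.
Set Implicit Arguments. Unset Strict Implicit. Unset Printing Implicit Defensive.
Import Order.TTheory GRing.Theory Num.Theory.
Import numFieldTopology.Exports numFieldNormedType.Exports.
Local Open Scope ring_scope.
Local Open Scope classical_set_scope.

Section Alg.
Variables (R : realType) (n : nat).
Notation vec := 'cV[R]_n.
Notation mat := 'M[R]_n.

Definition dot (u v : vec) : R := (u^T *m v) 0 0.
Definition enorm (v : vec) : R := Num.sqrt (dot v v).

(* "||A|| <= c" for the spectral (induced Euclidean) norm of a matrix:
   sup_{v <> 0} ||A v|| / ||v|| <= c, written out *)
Definition opnorm_le (A : mat) (c : R) : Prop :=
  forall v : vec, enorm (A *m v) <= c * enorm v.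

Definition model_decrease (g : vec) (H : mat) (s : vec) : R :=
  - (dot g s + 1/2 * dot s (H *m s)).

Inductive cgflag := BNDNEG | BNDNORM | INTRES | INTMAX.

(* the CG iterates (y_j, r_j, p_j), computed as if the loop never stopped *)
Fixpoint cg_state (g : vec) (H : mat) (eps : R) (j : nat) : vec * vec * vec :=
  match j with
  | 0 => (0, g, - g)
  | j'.+1 =>
    let: (y, r, p) := cg_state g H eps j' in
    let A := H + (2 * eps)%:M in
    let alpha := enorm r ^+ 2 / dot p (A *m p) in
    let y' := y + alpha *: p in
    let r' := r + alpha *: (A *m p) in
    let beta := enorm r' ^+ 2 / enorm r ^+ 2 in
    (y', r', - r' + beta *: p)
  end.

Definition cg_y g H eps j := (cg_state g H eps j).1.1.
Definition cg_r g H eps j := (cg_state g H eps j).1.2.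
Definition cg_p g H eps j := (cg_state g H eps j).2.

Definition cg_kmax (eps zeta : R) (capCG : bool) (M : R) : R :=
  if capCG then
    let kappa := (M + 2 * eps) / eps in
    Num.min n%:R (1/2 * Num.sqrt kappa *
                  ln (4 * (kappa * Num.sqrt kappa) / zeta))
  else n%:R.

Definition cg_negc g H eps j : Prop :=
  let p := cg_p g H eps j in
  dot p ((H + (2 * eps)%:M) *m p) <= eps * enorm p ^+ 2.
Definition cg_normc g H eps delta j : Prop :=
  delta <= enorm (cg_y g H eps j.+1).
Definition cg_resc g H eps zeta j : Prop :=
  enorm (cg_r g H eps j.+1) <=
    zeta / 2 * Num.min (enorm g) (eps * enorm (cg_y g H eps j.+1)).

Definition cg_boundary g H eps delta j (s : vec) : Prop :=
  exists sigma : R, 0 <= sigma /\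
    s = cg_y g H eps j + sigma *: cg_p g H eps j /\ enorm s = delta.

Definition CG_out (g : vec) (H : mat) (eps delta zeta : R) (capCG : bool) (M : R)
    (s : vec) (flag : cgflag) : Prop :=
  let kmax := cg_kmax eps zeta capCG M in
  exists j : nat,
    (forall i, (i < j)%N -> i%:R < kmax /\ ~ cg_negc g H eps i /\
        ~ cg_normc g H eps delta i /\ ~ cg_resc g H eps zeta i) /\
    ( (j%:R < kmax /\ cg_negc g H eps j /\
         flag = BNDNEG /\ cg_boundary g H eps delta j s)
   \/ (j%:R < kmax /\ ~ cg_negc g H eps j /\ cg_normc g H eps delta j /\
         flag = BNDNORM /\ cg_boundary g H eps delta j s)
   \/ (j%:R < kmax /\ ~ cg_negc g H eps j /\ ~ cg_normc g H eps delta j /\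
         cg_resc g H eps zeta j /\ flag = INTRES /\ s = cg_y g H eps j.+1)
   \/ (kmax <= j%:R /\ flag = INTMAX /\ s = cg_y g H eps j)).

(* Some s: a returned step;  None: the (possibly randomized) oracle returns an
   indication that H >= -eps I.  *)
Definition MEO_out (g : vec) (H : mat) (eps delta xi M : R) (o : option vec) : Prop :=
  match o with
  | Some s => exists v : vec, enorm v = 1 /\ dot v (H *m v) <= - (eps / 2) /\
              (s = delta *: v \/ s = - (delta *: v)) /\
              dot g s <= 0 /\ dot s (H *m s) <= - (1/2 * eps * enorm s ^+ 2) /\
              enorm s = delta
  | None => True
  end.

Record params := Params {
  eps_g : R; eps_H : R; gamma1 : R; gamma2 : R; psi : R;
  delta0 : R; delta_max : R; eta_acc : R; zeta : R; xi : R;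
  capCG : bool; Mc : R }.

Definition valid_params (P : params) (Lg : R) : Prop :=
  0 < eps_g P /\ 0 < eps_H P /\ 0 < gamma1 P < 1 /\ 1 <= gamma2 P /\
  1 / gamma2 P < psi P <= 1 /\ 0 < delta0 P /\ delta0 P <= delta_max P /\
  0 < eta_acc P < 1 /\ 0 < zeta P < 1 /\ 0 <= xi P < 1 /\ Lg <= Mc P.

Definition use_cg (P : params) (g : vec) (flag : cgflag) : Prop :=
  flag = BNDNEG \/ flag = BNDNORM \/ (eps_g P < enorm g /\ flag = INTRES).

Definition cg_phase (P : params) (g : vec) (H : mat) (delta : R)
    (sCG : vec) (flag : cgflag) : Prop :=
  (g != 0 -> CG_out g H (eps_H P) delta (zeta P) (capCG P) (Mc P) sCG flag) /\
  (g = 0 -> sCG = 0 /\ flag = INTRES).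

Definition rho (f : vec -> R) (g : vec -> vec) (H : vec -> mat) (x s : vec) : R :=
  (f x - f (x + s)) / model_decrease (g x) (H x) s.

Definition iter_completes (P : params) f g H (xk : vec) (dk : R) (sk : vec)
    (xk1 : vec) (dk1 : R) : Prop :=
  (exists sCG flag, cg_phase P (g xk) (H xk) dk sCG flag /\
     ((use_cg P (g xk) flag /\ sk = sCG) \/
      (~ use_cg P (g xk) flag /\ MEO_out (g xk) (H xk) (eps_H P) dk (xi P) (Mc P) (Some sk)))) /\
  (eta_acc P <= rho f g H xk sk ->
     xk1 = xk + sk /\
     dk1 = (if psi P * dk <= enorm sk then Num.min (gamma2 P * dk) (delta_max P) else dk)) /\
  (rho f g H xk sk < eta_acc P -> xk1 = xk /\ dk1 = gamma1 P * enorm sk).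

Definition iter_terminates (P : params) (g : vec -> vec) (H : vec -> mat) (xk : vec) (dk : R) : Prop :=
  exists sCG flag, cg_phase P (g xk) (H xk) dk sCG flag /\ ~ use_cg P (g xk) flag /\
     MEO_out (g xk) (H xk) (eps_H P) dk (xi P) (Mc P) None.

(* k is in the index set K (iteration k completed without termination);
   stop = Some N means termination happens at iteration N, None means no termination *)
Definition completed (stop : option nat) (k : nat) : Prop :=
  match stop with None => True | Some N => (k < N)%N end.
Definition reached (stop : option nat) (k : nat) : Prop :=
  match stop with None => True | Some N => (k <= N)%N end.

Definition alg4_run (P : params) f g H (x0 : vec)
    (x : nat -> vec) (d : nat -> R) (s : nat -> vec) (stop : option nat) : Prop :=
  x 0%N = x0 /\ d 0%N = delta0 P /\
  (forall k, completed stop k -> iter_completes P f g H (x k) (d k) (s k) (x k.+1) (d k.+1)) /\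
  (forall N, stop = Some N -> iter_terminates P g H (x N) (d N)).

Definition standing_assumption (f : vec -> R) (g : vec -> vec) (H : vec -> mat) (x : nat -> vec) (s : nat -> vec)
    (stop : option nat) (Lg LH : R) : Prop :=
  0 < Lg /\ 0 < LH /\
  (exists flow : R, forall k, reached stop k -> flow <= f (x k)) /\
  exists U : set vec, open U /\
    (forall k, completed stop k -> forall t : R, 0 <= t <= 1 -> U (x k + t *: s k)) /\
    (forall y, U y ->
       differentiable f y /\ (forall v, 'd f y v = dot (g y) v) /\
       differentiable g y /\ (forall v, 'd g y v = H y *m v) /\
       {for y, continuous H}) /\
    (forall y z, U y -> U z -> enorm (g y - g z) <= Lg * enorm (y - z)) /\
    (forall y z, U y -> U z -> opnorm_le (H y - H z) (LH * enorm (y - z))).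

Definition logb (b x : R) : R := ln x / ln b.

End Alg.

(* Main.v *)
Require Import Defs.
From HB Require Import structures.
From mathcomp Require Import all_boot all_order all_algebra.
From mathcomp Require Import all_classical all_reals all_analysis.
From mathcomp Require Import ring lra zify.
Import Order.TTheory GRing.Theory Num.Theory.
Import numFieldTopology.Exports numFieldNormedType.Exports.
Local Open Scope ring_scope.

Set Implicit Arguments. Unset Strict Implicit.
Section Lin.
Variables (R : realType) (n : nat).
Notation vec := 'cV[R]_n.
Notation mat := 'M[R]_n.
Implicit Types (u v w : vec) (A : mat).

Lemma dotE u v : dot u v = \sum_i u i 0 * v i 0.
Proof. by rewrite /dot mxE; apply: eq_bigr => i _; rewrite mxE. Qed.

Lemma dotC u v : dot u v = dot v u.
Proof. by rewrite !dotE; apply: eq_bigr => i _; rewrite mulrC. Qed.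

Lemma dotDl u v w : dot (u + v) w = dot u w + dot v w.
Proof. by rewrite !dotE -big_split; apply: eq_bigr => i _; rewrite mxE mulrDl. Qed.
Lemma dotDr u v w : dot w (u + v) = dot w u + dot w v.
Proof. by rewrite dotC dotDl !(dotC w). Qed.
Lemma dotZl a u v : dot (a *: u) v = a * dot u v.
Proof. by rewrite !dotE mulr_sumr; apply: eq_bigr => i _; rewrite mxE mulrA. Qed.
Lemma dotZr a u v : dot u (a *: v) = a * dot u v.
Proof. by rewrite dotC dotZl dotC. Qed.
Lemma dotNl u v : dot (- u) v = - dot u v.
Proof. by rewrite -scaleN1r dotZl mulN1r. Qed.
Lemma dotNr u v : dot u (- v) = - dot u v.
Proof. by rewrite -scaleN1r dotZr mulN1r. Qed.
Lemma dotBl u v w : dot (u - v) w = dot u w - dot v w.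
Proof. by rewrite dotDl dotNl. Qed.
Lemma dotBr u v w : dot w (u - v) = dot w u - dot w v.
Proof. by rewrite dotDr dotNr. Qed.
Lemma dot0l v : dot 0 v = 0.
Proof. by rewrite -(scale0r 0) dotZl mul0r. Qed.
Lemma dot0r v : dot v 0 = 0.
Proof. by rewrite dotC dot0l. Qed.
Lemma dot_ge0 u : 0 <= dot u u.
Proof. by rewrite dotE sumr_ge0 // => i _; rewrite -expr2 sqr_ge0. Qed.
Lemma dot_eq0 u : dot u u = 0 -> u = 0.
Proof.
rewrite dotE => /eqP; rewrite psumr_eq0; last by move=> i _; rewrite -expr2 sqr_ge0.
move=> /allP H; apply/matrixP => i j; rewrite ord1 mxE.
by have := H i (mem_index_enum _); rewrite -expr2 sqrf_eq0 => /eqP.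
Qed.
Lemma enorm_sq u : enorm u ^+ 2 = dot u u.
Proof. by rewrite /enorm sqr_sqrtr // dot_ge0. Qed.
Lemma enorm_ge0 u : 0 <= enorm u.
Proof. exact: sqrtr_ge0. Qed.
Lemma enorm_eq0 u : enorm u = 0 -> u = 0.
Proof. by move=> h; apply: dot_eq0; rewrite -enorm_sq h expr0n. Qed.
Lemma enormZ a u : enorm (a *: u) = `|a| * enorm u.
Proof. by rewrite /enorm dotZl dotZr mulrA -expr2 sqrtrM ?sqr_ge0 // sqrtr_sqr. Qed.
Lemma enormN u : enorm (- u) = enorm u.
Proof. by rewrite /enorm dotNl dotNr opprK. Qed.

Lemma CS u v : dot u v <= enorm u * enorm v.
Proof.
have [->|u0] := eqVneq u 0.
  by rewrite dot0l /enorm dot0l sqrtr0 mul0r.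
have uu : 0 < dot u u.
  rewrite lt_def dot_ge0 andbT; apply/eqP => /dot_eq0 h; by rewrite h eqxx in u0.
have key : (dot u v)^+2 <= dot u u * dot v v.
  have := dot_ge0 (dot u u *: v - dot u v *: u).
  rewrite !(dotBl, dotBr, dotZl, dotZr) (dotC v u).
  move=> h.
  have : 0 <= dot u u * (dot u u * dot v v - (dot u v)^+2) by nra.
  by rewrite pmulr_rge0 // subr_ge0.
have [le0|gt0] := lerP (dot u v) 0.
  by apply: le_trans le0 _; rewrite mulr_ge0 // enorm_ge0.
rewrite -(@ler_pXn2r _ 2) //; last by rewrite nnegrE mulr_ge0 // enorm_ge0.
  by rewrite exprMn !enorm_sq.
by rewrite nnegrE ltW.
Qed.

Lemma CSabs u v : `|dot u v| <= enorm u * enorm v.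
Proof.
rewrite ler_norml CS andbT lerNl -dotNl -(enormN u); exact: CS.
Qed.

Lemma dot_mulmx A u v : dot u (A *m v) = dot (A^T *m u) v.
Proof. by rewrite /dot trmx_mul trmxK mulmxA. Qed.

End Lin.

Unset Implicit Arguments. Set Strict Implicit.

Set Implicit Arguments. Unset Strict Implicit.
Local Open Scope classical_set_scope.
Section Der.
Variables (R : realType) (n : nat).
Notation vec := 'cV[R]_n.
Notation mat := 'M[R]_n.

Lemma line_quot (W : normedModType R) (F : vec -> W) (y w : vec) (t : R) :
  (fun h : R => h^-1 *: (((fun s : R => F (y + s *: w)) \o shift t) (h *: 1) - F (y + t *: w)))
  = (fun h : R => h^-1 *: ((F \o shift (y + t *: w)) (h *: w) - F (y + t *: w))).
Proof.
apply: funext => h /=; rewrite /shift /=; congr (_ *: (F _ - _)).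
by rewrite [h%:A]mulr1 scalerDl addrCA.
Qed.

Lemma line_derivable (W : normedModType R) (F : vec -> W) (y w : vec) (t : R) :
  derivable F (y + t *: w) w -> derivable (fun s : R => F (y + s *: w)) t 1.
Proof. by rewrite /derivable line_quot. Qed.

Lemma line_derive (W : normedModType R) (F : vec -> W) (y w : vec) (t : R) :
  'D_1 (fun s : R => F (y + s *: w)) t = 'D_w F (y + t *: w).
Proof. by rewrite /derive line_quot. Qed.

Lemma dot_continuous (v : vec) : continuous (fun u : vec => dot u v).
Proof.
move=> u; apply: differentiable_continuous.
have -> : (fun u : vec => dot u v) = \sum_(i < n) (fun u : vec => u i 0 * v i 0).
  by rewrite fct_sumE; apply: funext => z; rewrite dotE.
apply: differentiable_sum => i.
have -> : (fun u : vec => u i 0 * v i 0) = (fun u : vec => u i 0) * cst (v i 0) by [].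
apply: differentiableM; first exact: differentiable_coord.
exact: differentiable_cst.
Qed.

Lemma dot_derivable (V : normedModType R) (G : V -> vec) z w (v : vec) :
  derivable G z w -> derivable (fun z => dot (G z) v) z w /\
  'D_w (fun z => dot (G z) v) z = dot ('D_w G z) v.
Proof.
move=> dG.
have E : (fun h : R => h^-1 *: (((fun z => dot (G z) v) \o shift z) (h *: w) - dot (G z) v))
   = (fun u : vec => dot u v) \o (fun h : R => h^-1 *: ((G \o shift z) (h *: w) - G z)).
  by apply: funext => h /=; rewrite dotZl dotBl.
have C : ((fun h : R => h^-1 *: (((fun z => dot (G z) v) \o shift z) (h *: w) - dot (G z) v))
   @ 0^') --> dot ('D_w G z) v.
  rewrite E; apply: continuous_cvg; first exact: dot_continuous.
  exact: dG.
split; first by apply/cvg_ex; exists (dot ('D_w G z) v).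
exact: cvg_lim C.
Qed.

End Der.

Local Close Scope classical_set_scope.
Unset Implicit Arguments. Set Strict Implicit.

Set Implicit Arguments. Unset Strict Implicit.
Local Open Scope classical_set_scope.
Section Tay.
Variables (R : realType).

Lemma mono01 (psi dpsi : R -> R) :
  (forall t : R, 0 <= t <= 1 -> is_derive t (1:R) psi (dpsi t)) ->
  (forall t, 0 <= t <= 1 -> dpsi t <= 0) -> forall s, 0 <= s <= 1 -> psi s <= psi 0.
Proof.
move=> D N s /andP[s0 s1].
have [c cI E] : exists2 c, c \in `[0, s]%R & psi s - psi 0 = dpsi c * (s - 0).
  apply: MVT_segment => //.
    move=> x; rewrite in_itv /= => /andP[x0 x1]; apply: D; rewrite ltW //=.
    exact: le_trans (ltW x1) s1.
  apply: derivable_within_continuous => x; rewrite in_itv /= => /andP[x0 x1].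
  by have := D x; rewrite x0 (le_trans x1 s1) => /(_ isT) [].
have : dpsi c <= 0.
  by apply: N; move: cI; rewrite in_itv /= => /andP[-> /le_trans]; apply.
move: E; rewrite subr0 => E dc; rewrite -subr_le0 E; exact: mulr_le0_ge0.
Qed.

Lemma taylor1_up (phi phi1 : R -> R) (c : R) :
  (forall t : R, 0 <= t <= 1 -> is_derive t (1:R) phi (phi1 t)) ->
  (forall t, 0 <= t <= 1 -> phi1 t - phi1 0 <= c * t) ->
  phi 1 - phi 0 - phi1 0 <= c / 2.
Proof.
move=> D B.
pose psi := phi - cst (phi 0) - id * cst (phi1 0) - cst (c / 2) * (id ^+ 2).
have := @mono01 psi (fun t => phi1 t - phi1 0 - c * t).
have Dp : forall t : R, 0 <= t <= 1 -> is_derive t (1:R) psi (phi1 t - phi1 0 - c * t).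
  move=> t /D Dt; rewrite /psi.
  apply: is_derive_eq.
  rewrite !scaler0 ?addr0 ?add0r ?subr0 expr1 ![_%:A]mulr1.
  by congr (_ - _); rewrite -[(c / 2) *: _]/((c / 2) * _); field.
move=> /(_ Dp) H.
have : psi 1 <= psi 0.
  by apply: H => [t /B|]; rewrite ?subr_le0 ?ler01 ?lexx.
have E : forall t, psi t = phi t - phi 0 - t * phi1 0 - c / 2 * (t ^+ 2) by [].
rewrite !E expr0n /= expr1n; lra.
Qed.

Lemma taylor2_up (phi phi1 phi2 : R -> R) (c : R) :
  (forall t : R, 0 <= t <= 1 -> is_derive t (1:R) phi (phi1 t)) ->
  (forall t : R, 0 <= t <= 1 -> is_derive t (1:R) phi1 (phi2 t)) ->
  (forall t, 0 <= t <= 1 -> phi2 t - phi2 0 <= c * t) ->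
  phi 1 - phi 0 - phi1 0 - phi2 0 / 2 <= c / 6.
Proof.
move=> D D1 B.
pose psi1 := phi1 - cst (phi1 0) - id * cst (phi2 0) - cst (c / 2) * (id ^+ 2).
have E1 : forall t, psi1 t = phi1 t - phi1 0 - t * phi2 0 - c / 2 * (t ^+ 2) by [].
have Dp1 : forall t : R, 0 <= t <= 1 -> is_derive t (1:R) psi1 (phi2 t - phi2 0 - c * t).
  move=> t /D1 Dt; rewrite /psi1.
  apply: is_derive_eq.
  rewrite !scaler0 ?addr0 ?add0r ?subr0 expr1 ![_%:A]mulr1.
  by congr (_ - _); rewrite -[(c / 2) *: _]/((c / 2) * _); field.
have P1 : forall t, 0 <= t <= 1 -> psi1 t <= 0.
  move=> t Ht; have := @mono01 psi1 _ Dp1.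
  have -> : psi1 0 = 0 by rewrite E1 expr0n /=; ring.
  by apply => // u /B; rewrite subr_le0.
pose psi := phi - cst (phi 0) - id * cst (phi1 0) - cst (phi2 0 / 2) * (id ^+ 2)
   - cst (c / 6) * (id ^+ 3).
have E : forall t, psi t = phi t - phi 0 - t * phi1 0 - phi2 0 / 2 * (t ^+ 2)
   - c / 6 * t ^+ 3 by [].
have Dp : forall t : R, 0 <= t <= 1 -> is_derive t (1:R) psi (psi1 t).
  move=> t /D Dt; rewrite /psi.
  apply: is_derive_eq.
  rewrite E1 !scaler0 ?addr0 ?add0r ?subr0 expr1 ![_%:A]mulr1.
  rewrite -[(c / 6) *: _]/((c / 6) * _) -[(phi2 0 / 2) *: _]/((phi2 0 / 2) * _).
  by rewrite /=; field.
have := @mono01 psi _ Dp P1 1.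
rewrite !E expr0n /= !expr1n ler01 lexx => /(_ isT); lra.
Qed.


Lemma taylor2_abs (phi phi1 phi2 : R -> R) (c : R) :
  (forall t : R, 0 <= t <= 1 -> is_derive t (1:R) phi (phi1 t)) ->
  (forall t : R, 0 <= t <= 1 -> is_derive t (1:R) phi1 (phi2 t)) ->
  (forall t, 0 <= t <= 1 -> `|phi2 t - phi2 0| <= c * t) ->
  `|phi 1 - phi 0 - phi1 0 - phi2 0 / 2| <= c / 6.
Proof.
move=> D D1 B; rewrite ler_norml; apply/andP; split.
  have := @taylor2_up (- phi) (fun t => - phi1 t) (fun t => - phi2 t) c.
  have Ef : forall t, (- phi) t = - phi t by [].
  rewrite !Ef.
  have H1 : forall t : R, 0 <= t <= 1 -> is_derive t (1:R) (- phi) (- phi1 t).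
    by move=> t /D Dt; apply: is_deriveN.
  have H2 : forall t : R, 0 <= t <= 1 -> is_derive t (1:R) (fun t => - phi1 t) (- phi2 t).
    move=> t /D1 Dt; have -> : (fun t => - phi1 t) = - phi1 by [].
    exact: is_deriveN.
  move=> /(_ H1 H2) H; have : - phi 1 + phi 0 + phi1 0 + phi2 0 / 2 <= c / 6.
    have -> : - phi 1 + phi 0 + phi1 0 + phi2 0 / 2 =
              - phi 1 - - phi 0 - - phi1 0 - - phi2 0 / 2 by rewrite !opprK mulNr opprK.
    apply: H => t /B; rewrite ler_norml => /andP[h _]; lra.
  lra.
apply: taylor2_up => // t /B; rewrite ler_norml => /andP[_ h]; lra.
Qed.

Lemma taylor1_abs (phi phi1 : R -> R) (c : R) :
  (forall t : R, 0 <= t <= 1 -> is_derive t (1:R) phi (phi1 t)) ->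
  (forall t, 0 <= t <= 1 -> `|phi1 t - phi1 0| <= c * t) ->
  `|phi 1 - phi 0 - phi1 0| <= c / 2.
Proof.
move=> D B; rewrite ler_norml; apply/andP; split.
  have := @taylor1_up (- phi) (fun t => - phi1 t) c.
  have Ef : forall t, (- phi) t = - phi t by [].
  rewrite !Ef.
  have H1 : forall t : R, 0 <= t <= 1 -> is_derive t (1:R) (- phi) (- phi1 t).
    by move=> t /D Dt; apply: is_deriveN.
  move=> /(_ H1) H; have : - phi 1 + phi 0 + phi1 0 <= c / 2.
    have -> : - phi 1 + phi 0 + phi1 0 = - phi 1 - - phi 0 - - phi1 0 by rewrite !opprK.
    apply: H => t /B; rewrite ler_norml => /andP[h _]; lra.
  lra.
apply: taylor1_up => // t /B; rewrite ler_norml => /andP[_ h]; lra.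
Qed.

End Tay.

Local Close Scope classical_set_scope.
Unset Implicit Arguments. Set Strict Implicit.

Set Implicit Arguments. Unset Strict Implicit.
Local Open Scope classical_set_scope.
Section Smooth.
Variables (R : realType) (n : nat).
Notation vec := 'cV[R]_n.
Notation mat := 'M[R]_n.
Variables (f : vec -> R) (g : vec -> vec) (H : vec -> mat) (U : set vec) (LH : R).
Hypothesis hf : forall y, U y ->
  differentiable f y /\ (forall v, 'd f y v = dot (g y) v) /\
  differentiable g y /\ (forall v, 'd g y v = H y *m v).
Hypothesis hH : forall y z, U y -> U z -> opnorm_le (H y - H z) (LH * enorm (y - z)).

Lemma der_f y w t : U (y + t *: w) ->
  is_derive t (1:R) (fun s => f (y + s *: w)) (dot (g (y + t *: w)) w).
Proof.
move=> /hf [df [Ef _]]; apply: DeriveDef.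
  by apply: line_derivable; apply: diff_derivable.
by rewrite line_derive deriveE // Ef.
Qed.

Lemma der_g y w v t : U (y + t *: w) ->
  is_derive t (1:R) (fun s => dot (g (y + s *: w)) v) (dot (H (y + t *: w) *m w) v).
Proof.
move=> /hf [_ [_ [dg Eg]]].
have dG : derivable g (y + t *: w) w by apply: diff_derivable.
have [d1 d2] := @dot_derivable R n _ g _ _ v dG.
apply: DeriveDef.
  exact: (@line_derivable R n _ (fun z => dot (g z) v)).
by rewrite (@line_derive R n _ (fun z => dot (g z) v)) d2 deriveE // Eg.
Qed.

Lemma Hdiff_bound y w v t : 0 <= t -> U (y + t *: w) -> U y ->
  `|dot ((H (y + t *: w) - H y) *m w) v| <= LH * enorm w ^+ 2 * enorm v * t.
Proof.
move=> t0 Uz Uy.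
apply: le_trans (CSabs _ _) _.
have := hH Uz Uy ((w)); rewrite addrAC subrr add0r enormZ ger0_norm // => h.
have := enorm_ge0 v => v0.
apply: le_trans (ler_wpM2r v0 h) _.
move: (enorm w) (enorm v) => a b. by rewrite le_eqVlt; apply/orP; left; apply/eqP; ring.
Qed.

Lemma taylor_f y w : (forall t, 0 <= t <= 1 -> U (y + t *: w)) ->
  `|f (y + w) - f y - dot (g y) w - dot w (H y *m w) / 2| <= LH * enorm w ^+ 3 / 6.
Proof.
move=> seg.
have U0 : U y by have := seg 0; rewrite scale0r addr0 lexx ler01 => /(_ isT).
have := @taylor2_abs R (fun s => f (y + s *: w)) (fun s => dot (g (y + s *: w)) w)
  (fun s => dot (H (y + s *: w) *m w) w) (LH * enorm w ^+ 3).
rewrite scale1r !scale0r !addr0 (dotC w) mulrA.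
apply.
- by move=> t /seg; apply: der_f.
- by move=> t /seg; apply: der_g.
- move=> t /andP[t0 t1].
  rewrite -dotBl -mulmxBl.
  have hb := Hdiff_bound w t0 (seg t (introT andP (conj t0 t1))) U0.
  apply: le_trans hb _; move: (enorm w) => a.
  by rewrite le_eqVlt; apply/orP; left; apply/eqP; ring.
Qed.

Lemma taylor_g y w v : (forall t, 0 <= t <= 1 -> U (y + t *: w)) ->
  `|dot (g (y + w)) v - dot (g y) v - dot (H y *m w) v| <= LH * enorm w ^+ 2 * enorm v / 2.
Proof.
move=> seg.
have U0 : U y by have := seg 0; rewrite scale0r addr0 lexx ler01 => /(_ isT).
have := @taylor1_abs R (fun s => dot (g (y + s *: w)) v)
  (fun s => dot (H (y + s *: w) *m w) v) (LH * enorm w ^+ 2 * enorm v).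
rewrite scale1r !scale0r !addr0.
apply.
- by move=> t /seg; apply: der_g.
- move=> t /andP[t0 t1].
  rewrite -dotBl -mulmxBl.
  have hb := Hdiff_bound v t0 (seg t (introT andP (conj t0 t1))) U0.
  apply: le_trans hb _; move: (enorm w) (enorm v) => a b.
  by rewrite le_eqVlt; apply/orP; left; apply/eqP; ring.
Qed.

End Smooth.

Local Close Scope classical_set_scope.
Unset Implicit Arguments. Set Strict Implicit.

Set Implicit Arguments. Unset Strict Implicit.
Local Open Scope classical_set_scope.
Section Sym.
Variables (R : realType) (n : nat).
Notation vec := 'cV[R]_n.
Notation mat := 'M[R]_n.
Variables (f : vec -> R) (g : vec -> vec) (H : vec -> mat) (U : set vec) (LH : R).
Hypothesis hf : forall y, U y ->
  differentiable f y /\ (forall v, 'd f y v = dot (g y) v) /\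
  differentiable g y /\ (forall v, 'd g y v = H y *m v).
Hypothesis hH : forall y z, U y -> U z -> opnorm_le (H y - H z) (LH * enorm (y - z)).

Lemma Hlip_dot y z a b : U y -> U z ->
  `|dot ((H z - H y) *m a) b| <= LH * enorm (z - y) * enorm a * enorm b.
Proof.
move=> Uy Uz; apply: le_trans (CSabs _ _) _.
apply: ler_wpM2r; [exact: enorm_ge0 | exact: (hH Uz Uy a)].
Qed.

Lemma second_diff x a b :
  (forall al be : R, 0 <= al <= 1 -> 0 <= be <= 1 -> U (x + al *: a + be *: b)) ->
  `|f (x + a + b) - f (x + a) - f (x + b) + f x - dot (H x *m a) b|
    <= LH * (enorm b ^+ 3 / 3 + enorm a ^+ 2 * enorm b / 2 + enorm a * enorm b ^+ 2 / 2).
Proof.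
move=> box.
have seg1 : forall s, 0 <= s <= 1 -> U ((x + a) + s *: b).
  by move=> s hs; have := box 1 s; rewrite scale1r lexx ler01 => /(_ isT hs).
have seg2 : forall s, 0 <= s <= 1 -> U (x + s *: b).
  by move=> s hs; have := box 0 s; rewrite scale0r addr0 lexx ler01 => /(_ isT hs).
have seg3 : forall s, 0 <= s <= 1 -> U (x + s *: a).
  by move=> s hs; have := box s 0; rewrite scale0r addr0 lexx ler01 => /(_ hs isT).
have Ux : U x by have := seg2 0; rewrite scale0r addr0 lexx ler01 => /(_ isT).
have Uxa : U (x + a) by have := seg3 1; rewrite scale1r lexx ler01 => /(_ isT).
have T1 := taylor_f hf hH seg1.
have T2 := taylor_f hf hH seg2.
have T3 := taylor_g hf hH b seg3.
have T4 := Hlip_dot b b Ux Uxa.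
rewrite addrAC subrr add0r in T4.
move: T1 T2 T3 T4; rewrite mulmxBl dotBl (dotC b (H (x + a) *m b)) (dotC b (H x *m b)).
move: (enorm a) (enorm b) => na nb.
rewrite !ler_norml => /andP[T1 T1'] /andP[T2 T2'] /andP[T3 T3'] /andP[T4 T4'].
apply/andP; split; lra.
Qed.


Lemma small_zero (d K t0 : R) : 0 < t0 -> (forall t, 0 < t <= t0 -> `|d| <= t * K) -> d = 0.
Proof.
move=> t00 B; apply/eqP; apply/negPn/negP => d0.
have dp : 0 < `|d| by rewrite normr_gt0.
pose t := Num.min t0 (`|d| / (2 * (`|K| + 1))).
have Kp : 0 < 2 * (`|K| + 1) by rewrite mulr_gt0 // ltr_wpDl.
have tp : 0 < t by rewrite /t lt_min t00 divr_gt0.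
have tt0 : t <= t0 by rewrite /t ge_min lexx.
have tle : t <= `|d| / (2 * (`|K| + 1)) by rewrite /t ge_min lexx orbT.
have := B t; rewrite tp tt0 => /(_ isT) h.
have h2 : t * K <= t * `|K| by rewrite ler_pM2l // ler_norm.
have h3 : t * `|K| <= `|d| / (2 * (`|K| + 1)) * `|K| by rewrite ler_wpM2r.
have h4 : `|d| / (2 * (`|K| + 1)) * `|K| < `|d|.
  rewrite mulrAC ltr_pdivrMr // ltr_pM2l //; nra.
have := le_lt_trans (le_trans h (le_trans h2 h3)) h4; by rewrite ltxx.
Qed.

Lemma H_sym x : open U -> U x -> forall u v, dot (H x *m u) v = dot (H x *m v) u.
Proof.
move=> oU Ux u v.
have [r r0 sub] : exists2 r : R, 0 < r & forall z, `|x - z| < r -> U z.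
  have : nbhs x U by apply: open_nbhs_nbhs; split.
  move/nbhs_ballP => [r r0 sub]; exists r => // z hz; apply: sub.
  by rewrite -ball_normE /=.
pose Nu := `|u|; pose Nv := `|v|.
have Nu0 : 0 <= Nu by rewrite normr_ge0.
have Nv0 : 0 <= Nv by rewrite normr_ge0.
pose t0 := r / (Nu + Nv + 1).
have t00 : 0 < t0 by rewrite divr_gt0 // ltr_wpDl // addr_ge0.
have box : forall t, 0 < t <= t0 -> forall (a b : vec), (a = t *: u /\ b = t *: v) \/ (a = t *: v /\ b = t *: u) ->
    forall al be : R, 0 <= al <= 1 -> 0 <= be <= 1 -> U (x + al *: a + be *: b).
  move=> t /andP[tp tt0] a b ab al be /andP[al0 al1] /andP[be0 be1]; apply: sub.
  rewrite -addrA opprD addrA subrr add0r normrN.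
  apply: le_lt_trans (ler_normD _ _) _.
  rewrite !normrZ !ger0_norm //.
  have L1 : `|a| + `|b| = t * (Nu + Nv).
    by case: ab => -[-> ->]; rewrite !normrZ ger0_norm ?ltW // -mulrDr // addrC.
  have na : 0 <= `|a| by rewrite normr_ge0.
  have nb : 0 <= `|b| by rewrite normr_ge0.
  have L2 : al * `|a| + be * `|b| <= `|a| + `|b|.
    by apply: lerD; rewrite -[leRHS]mul1r ler_wpM2r.
  apply: le_lt_trans L2 _; rewrite L1.
  have L3 : t * (Nu + Nv) <= t0 * (Nu + Nv) by rewrite ler_wpM2r // addr_ge0.
  apply: le_lt_trans L3 _.
  rewrite /t0 mulrAC ltr_pdivrMr ?ltr_wpDl ?addr_ge0 // ltr_pM2l //.
  by rewrite ltrDl.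
pose X := dot (H x *m u) v; pose Y := dot (H x *m v) u.
pose nu := enorm u; pose nv := enorm v.
pose K := LH * (nv ^+ 3 / 3 + nu ^+ 2 * nv / 2 + nu * nv ^+ 2 / 2)
        + LH * (nu ^+ 3 / 3 + nv ^+ 2 * nu / 2 + nv * nu ^+ 2 / 2).
apply/eqP; rewrite -subr_eq0; apply/eqP; apply: (@small_zero _ K t0 t00).
move=> t ht; have tp : 0 < t by case/andP: ht.
have S1 := second_diff (box t ht (t *: u) (t *: v) (or_introl (conj erefl erefl))).
have S2 := second_diff (box t ht (t *: v) (t *: u) (or_intror (conj erefl erefl))).
rewrite -(addrAC x) in S2.
rewrite -!scalemxAr !dotZl !dotZr !enormZ !(ger0_norm (ltW tp)) -/X -/Y -/nu -/nv in S1 S2.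
have key : `|t * (t * X) - t * (t * Y)| <=
    LH * ((t * nv) ^+ 3 / 3 + (t * nu) ^+ 2 * (t * nv) / 2 + t * nu * (t * nv) ^+ 2 / 2)
  + LH * ((t * nu) ^+ 3 / 3 + (t * nv) ^+ 2 * (t * nu) / 2 + t * nv * (t * nu) ^+ 2 / 2).
  move: S1 S2; rewrite !ler_norml => /andP[a1 a2] /andP[b1 b2].
  apply/andP; split; lra.
have E1 : t * (t * X) - t * (t * Y) = t ^+ 2 * (X - Y) by ring.
have E2 : LH * ((t * nv) ^+ 3 / 3 + (t * nu) ^+ 2 * (t * nv) / 2 + t * nu * (t * nv) ^+ 2 / 2)
  + LH * ((t * nu) ^+ 3 / 3 + (t * nv) ^+ 2 * (t * nu) / 2 + t * nv * (t * nu) ^+ 2 / 2)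
  = t ^+ 2 * (t * K) by rewrite /K; ring.
rewrite E1 E2 normrM ger0_norm ?exprn_ge0 ?(ltW tp) // in key.
by rewrite -(ler_pM2l (exprn_gt0 2 tp)).
Qed.

End Sym.

Local Close Scope classical_set_scope.
Unset Implicit Arguments. Set Strict Implicit.

Set Implicit Arguments. Unset Strict Implicit.
Section CG.
Variables (R : realType) (n : nat).
Notation vec := 'cV[R]_n.
Notation mat := 'M[R]_n.
Variables (g : vec) (H : mat) (eps : R).
Let A := H + (2 * eps)%:M.
Hypothesis Asym : forall u v, dot (A *m u) v = dot (A *m v) u.
Let y j := cg_y g H eps j.
Let r j := cg_r g H eps j.
Let p j := cg_p g H eps j.
Let a j := dot (p j) (A *m p j).
Let alpha j := enorm (r j) ^+ 2 / a j.
Let beta j := enorm (r j.+1) ^+ 2 / enorm (r j) ^+ 2.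

Lemma yS j : y j.+1 = y j + alpha j *: p j.
Proof. by rewrite /y /alpha /a /r /p /cg_y /cg_r /cg_p /=; case: (cg_state g H eps j) => [[? ?] ?]. Qed.
Lemma rS j : r j.+1 = r j + alpha j *: (A *m p j).
Proof. by rewrite /y /alpha /a /r /p /cg_y /cg_r /cg_p /=; case: (cg_state g H eps j) => [[? ?] ?]. Qed.
Lemma pS j : p j.+1 = - r j.+1 + beta j *: p j.
Proof. by rewrite /beta /alpha /a /r /p /cg_y /cg_r /cg_p /=; case: (cg_state g H eps j) => [[? ?] ?]. Qed.
Lemma y0 : y 0 = 0. Proof. by []. Qed.
Lemma r0 : r 0 = g. Proof. by []. Qed.
Lemma p0 : p 0 = - g. Proof. by []. Qed.

Lemma r_res j : r j = g + A *m y j.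
Proof.
elim: j => [|j IH]; first by rewrite r0 y0 mulmx0 addr0.
by rewrite rS yS IH mulmxDr scalemxAr addrA.
Qed.


Let nr j := dot (r j) (r j).
Definition PJ J := forall i, (i < J)%N -> 0 < a i /\ 0 < nr i.

Lemma enr j : enorm (r j) ^+ 2 = nr j. Proof. exact: enorm_sq. Qed.

Lemma Ap_dot i w : alpha i != 0 ->
  dot (A *m p i) w = (dot (r i.+1) w - dot (r i) w) / alpha i.
Proof.
move=> al0; rewrite rS dotDl dotZl addrC addKr mulrC mulKf //.
Qed.

Lemma r_of_p i : r i.+1 = beta i *: p i - p i.+1.
Proof. by rewrite pS opprD opprK addrCA subrr addr0. Qed.

Lemma orth J : PJ J -> forall k, (k <= J)%N -> forall i, (i < k)%N ->
  [/\ dot (r k) (p i) = 0, dot (p k) (A *m p i) = 0 & dot (r k) (r i) = 0].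
Proof.
move=> HP; elim => [//|k IH] kJ.
have kJ' : (k < J)%N by [].
have IHk := IH (ltnW kJ).
have [ak nrk] := HP k kJ'.
have al0 : alpha k != 0 by rewrite /alpha enr; apply/lt0r_neq0; rewrite divr_gt0.
have Lk : dot (r k) (p k) = - nr k.
  case: k IH kJ kJ' IHk ak nrk al0 => [|k] IH kJ kJ' IHk ak nrk al0.
    by rewrite r0 p0 dotNr.
  rewrite pS dotDr dotNr dotZr.
  by have [-> _ _] := IHk k (ltnSn k); rewrite mulr0 addr0.
have G1 : forall i, (i < k.+1)%N -> dot (r k.+1) (p i) = 0.
  move=> i; rewrite ltnS leq_eqVlt => /orP[/eqP->|ik].
    rewrite rS dotDl dotZl (dotC (A *m p k)) Lk /alpha enr -/(a k).
    by rewrite mulfVK ?lt0r_neq0 // addNr.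
  rewrite rS dotDl dotZl Asym (dotC (A *m p i)).
  by have [-> -> _] := IHk i ik; rewrite mulr0 addr0.
have G3 : forall i, (i < k.+1)%N -> dot (r k.+1) (r i) = 0.
  case=> [_|i ik]; first by rewrite r0 -(opprK g) -p0 dotNr G1 // oppr0.
  by rewrite (r_of_p i) dotBr dotZr !G1 ?(ltnW ik) // mulr0 subr0.
move=> i ik; split; [exact: G1 | | exact: G3].
have [alpi ai0] : alpha i != 0 /\ a i != 0.
  have [ai nri] := HP i (leq_ltn_trans (ltnSE ik) kJ').
  by split; [rewrite /alpha enr; apply/lt0r_neq0; rewrite divr_gt0 | exact: lt0r_neq0].
rewrite pS dotDl dotNl dotZl (dotC (r k.+1)) Ap_dot //.
move: ik; rewrite ltnS leq_eqVlt => /orP[/eqP->|ik].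
  rewrite (dotC (r k)) (G3 k) // subr0 /alpha /beta !enr -/(a k).
  have nr0 : nr k != 0 by exact: lt0r_neq0.
  have ak0 : a k != 0 by exact: lt0r_neq0.
  rewrite -/(nr k.+1); field; by apply/andP; split.
rewrite (dotC (r i.+1)) (dotC (r i)) !G3 ?(ltnW ik) // ?(ltn_trans ik) // subrr mul0r oppr0 add0r.
by have [_ -> _] := IHk i ik; rewrite mulr0.
Qed.


Lemma rp J : PJ J -> forall k, (k <= J)%N -> dot (r k) (p k) = - nr k.
Proof.
move=> HP [|k] kJ; first by rewrite r0 p0 dotNr.
rewrite pS dotDr dotNr dotZr.
by have [-> _ _] := orth HP kJ (ltnSn k); rewrite mulr0 addr0.
Qed.

Lemma beta_ge0 k : 0 <= beta k.
Proof. by rewrite /beta divr_ge0 // enorm_sq dot_ge0. Qed.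

Lemma alpha_ge0 J : PJ J -> forall k, (k < J)%N -> 0 <= alpha k.
Proof.
move=> HP k kJ; have [ak _] := HP k kJ.
by rewrite /alpha divr_ge0 // ?enorm_sq ?dot_ge0 // ltW.
Qed.

Lemma pp J : PJ J -> forall k m, (k <= m)%N -> (m <= J)%N -> 0 <= dot (p k) (p m).
Proof.
move=> HP k; elim=> [|m IH] km mJ.
  by move: km; rewrite leqn0 => /eqP->; exact: dot_ge0.
move: km; rewrite leq_eqVlt => /orP[/eqP->|km]; first exact: dot_ge0.
rewrite pS dotDr dotNr dotZr (dotC (p k)).
have [-> _ _] := orth HP mJ km.
by rewrite oppr0 add0r mulr_ge0 ?beta_ge0 // IH // ltnW.
Qed.

Lemma yp J : PJ J -> forall k m, (k <= m)%N -> (m <= J)%N -> 0 <= dot (y k) (p m).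
Proof.
move=> HP; elim=> [|k IH] m km mJ; first by rewrite y0 dot0l.
rewrite yS dotDl dotZl addr_ge0 ?IH ?(ltnW km) //.
rewrite mulr_ge0 ?(pp HP) ?(ltnW km) //.
exact: alpha_ge0 HP k (leq_trans km mJ).
Qed.

Definition Qf (z : vec) := dot g z + dot z (A *m z) / 2.

Lemma Q_line z w t :
  Qf (z + t *: w) = Qf z + t * dot (g + A *m z) w + t ^+ 2 / 2 * dot w (A *m w).
Proof.
rewrite /Qf mulmxDr -scalemxAr !(dotDl, dotDr, dotZl, dotZr).
rewrite (dotC w (A *m z)) (dotC z (A *m w)) Asym.
by rewrite expr2; field.
Qed.

Lemma Q_step J : PJ J -> forall k, (k < J)%N -> Qf (y k.+1) <= Qf (y k).
Proof.
move=> HP k kJ; have [ak nrk] := HP k kJ.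
rewrite yS Q_line -r_res (rp HP (ltnW kJ)) -/(a k) /alpha enr.
rewrite -[leRHS]addr0 -addrA lerD2l.
have -> : nr k / a k * - nr k + (nr k / a k) ^+ 2 / 2 * a k = - (nr k ^+ 2 / a k / 2).
  by field; apply: lt0r_neq0.
by rewrite oppr_le0 !divr_ge0 // ?sqr_ge0 ?ltW.
Qed.

Lemma Q_le0 J : PJ J -> forall k, (k <= J)%N -> Qf (y k) <= 0.
Proof.
move=> HP; elim=> [|k IH] kJ; first by rewrite y0 /Qf dot0r mulmx0 dot0r mul0r addr0.
exact: le_trans (Q_step HP kJ) (IH (ltnW kJ)).
Qed.

End CG.

Unset Implicit Arguments. Set Strict Implicit.

Set Implicit Arguments. Unset Strict Implicit.
Section CGok.
Variables (R : realType) (n : nat).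
Notation vec := 'cV[R]_n.
Notation mat := 'M[R]_n.

Lemma enorm0 : enorm (0 : vec) = 0.
Proof. by rewrite /enorm dot0l sqrtr0. Qed.

Lemma enorm_gt0 (u : vec) : u != 0 -> 0 < enorm u.
Proof.
move=> u0; rewrite lt_def enorm_ge0 andbT; apply/eqP => /enorm_eq0 h.
by rewrite h eqxx in u0.
Qed.

Lemma dot_gt0 (u : vec) : u != 0 -> 0 < dot u u.
Proof. by move=> /enorm_gt0 h; rewrite -enorm_sq exprn_gt0. Qed.

Variables (g : vec) (H : mat) (eps delta zeta : R) (capCG : bool) (M : R).
Hypothesis g0 : g != 0.
Hypothesis Hsym : forall u v, dot (H *m u) v = dot (H *m v) u.
Hypothesis eps0 : 0 < eps.
Hypothesis delta0 : 0 < delta.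
Hypothesis zeta0 : 0 < zeta.

Let A := H + (2 * eps)%:M.
Lemma Asym : forall u v : vec, dot (A *m u) v = dot (A *m v) u.
Proof.
move=> u v; rewrite /A !mulmxDl !mul_scalar_mx !dotDl !dotZl Hsym; congr (_ + _).
by rewrite dotC.
Qed.

Let y j := cg_y g H eps j.
Let r j := cg_r g H eps j.
Let p j := cg_p g H eps j.

Lemma prem_PJ j :
  (forall i, (i < j)%N -> ~ cg_negc g H eps i /\ ~ cg_resc g H eps zeta i) ->
  PJ g H eps j /\ 0 < dot (r j) (r j).
Proof.
move=> P.
have nrpos : forall i, (i <= j)%N -> 0 < dot (r i) (r i).
  case=> [_|i ij]; first exact: dot_gt0.
  have [_ nres] := P i ij.
  rewrite -enorm_sq exprn_gt0 //.
  move: nres; rewrite /cg_resc => /negP; rewrite -ltNge => h.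
  apply: le_lt_trans h; rewrite mulr_ge0 // ?divr_ge0 ?(ltW zeta0) //.
  by rewrite le_min enorm_ge0 mulr_ge0 ?enorm_ge0 ?(ltW eps0).
split; last exact: nrpos.
move=> i ij; split; last exact: nrpos (ltnW ij).
have [nneg _] := P i ij.
move: nneg; rewrite /cg_negc => /negP; rewrite -ltNge => h.
apply: le_lt_trans h; rewrite mulr_ge0 ?sqr_ge0 ?ltW //.
Qed.

Lemma md_Q (s : vec) :
  model_decrease g H s = - Qf g H eps s + eps * dot s s.
Proof.
rewrite /model_decrease /Qf mulmxDl mul_scalar_mx dotDr dotZr.
by field.
Qed.

Lemma cg_step_ok s flag :
  CG_out g H eps delta zeta capCG M s flag -> flag <> INTMAX ->
  0 < enorm s <= delta /\ eps / 2 * enorm s ^+ 2 <= model_decrease g H s.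
Proof.
move=> [j [pre cases]] nmax.
have P' : forall i, (i < j)%N -> ~ cg_negc g H eps i /\ ~ cg_resc g H eps zeta i.
  by move=> i /pre [_ [? [_ ?]]].
have [PJj nrj] := prem_PJ P'.
have ynorm : enorm (y j) < delta.
  case: j pre cases P' PJj nrj => [|j] pre cases P' PJj nrj.
    by rewrite /y /cg_y /= enorm0.
  have [_ [_ [nn _]]] := pre j (ltnSn j).
  by move: nn; rewrite /cg_normc => /negP; rewrite -ltNge.
rewrite md_Q enorm_sq.
suff [Hs HQ] : 0 < enorm s <= delta /\ Qf g H eps s <= eps / 2 * dot s s.
  by split=> //; lra.
case: cases => [[_ [neg [_ [sig [sig0 [-> ns]]]]]]|[[_ [nneg [nrm [_ [sig [sig0 [-> ns]]]]]]]|[[_ [nneg [nnrm [res [_ ->]]]]]|[_ [fl _]]]]].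
-
  split; first by rewrite ns delta0 lexx.
  rewrite Q_line; last exact: Asym.
  rewrite -r_res (rp Asym PJj (leqnn j)).
  have Q0 := Q_le0 Asym PJj (leqnn j).
  have YP := yp Asym PJj (leqnn j) (leqnn j).
  move: neg; rewrite /cg_negc enorm_sq => neg.
  rewrite !(dotDl, dotDr, dotZl, dotZr) (dotC (p j) (y j)).
  have yy := dot_ge0 (y j); have pp := dot_ge0 (p j).
  move: Q0 YP neg yy pp nrj; rewrite /Qf.
  move: (dot g (y j) + _) (dot (y j) (p j)) (dot (p j) (A *m p j)) (dot (y j) (y j)) (dot (p j) (p j)) (dot (r j) (r j)).
  move=> Q yp a yy pp nr Q0 YP neg Y P N.
  have h1 : sig ^+ 2 * a <= sig ^+ 2 * (eps * pp) by rewrite ler_wpM2l ?sqr_ge0.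
  have h2 := mulr_ge0 (ltW eps0) Y.
  have h3 := mulr_ge0 (ltW eps0) (mulr_ge0 sig0 YP).
  have h4 := mulr_ge0 sig0 (ltW N).
  nra.
-
  split; first by rewrite ns delta0 lexx.
  have apos : 0 < dot (p j) (A *m p j).
    move: nneg; rewrite /cg_negc => /negP; rewrite -ltNge => h.
    by apply: le_lt_trans h; rewrite mulr_ge0 ?sqr_ge0 ?ltW.
  move: nrm; rewrite /cg_normc (yS g H eps j) => nrm.
  have h1 : delta ^+ 2 <= dot (y j + (enorm (r j) ^+ 2 / dot (p j) (A *m p j)) *: p j)
                              (y j + (enorm (r j) ^+ 2 / dot (p j) (A *m p j)) *: p j).
    by rewrite -enorm_sq lerXn2r // ?nnegrE ?enorm_ge0 ?ltW.
  have h2 : dot (y j + sig *: p j) (y j + sig *: p j) = delta ^+ 2 by rewrite -enorm_sq ns.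
  have h3 : dot (y j) (y j) < delta ^+ 2.
    by rewrite -enorm_sq ltrXn2r // ?nnegrE ?enorm_ge0 ?ltW.
  rewrite Q_line; last exact: Asym.
  rewrite -r_res (rp Asym PJj (leqnn j)).
  have Q0 := Q_le0 Asym PJj (leqnn j).
  have ss := dot_ge0 (y j + sig *: p j).
  move: h1 h2 h3 ss; rewrite enorm_sq !(dotDl, dotDr, dotZl, dotZr) (dotC (p j) (y j)).
  have pp := dot_ge0 (p j).
  move: Q0 apos pp nrj; rewrite /Qf.
  move: (dot g (y j) + _) (dot (y j) (p j)) (dot (p j) (A *m p j)) (dot (y j) (y j)) (dot (p j) (p j)) (dot (r j) (r j)).
  move=> Q yp a yy pp nr Q0 apos P N h1 h2 h3 ss.
  set al := nr / a.
  have al0 : 0 < al by rewrite divr_gt0.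
  have sigal : sig <= al.
    rewrite leNgt; apply/negP => lt.
    have E : sig * (yy + al * yp + (al * yp + al * (al * pp)) - delta ^+ 2)
           - al * (yy + sig * yp + (sig * yp + sig * (sig * pp)) - delta ^+ 2)
           = (sig - al) * (yy - delta ^+ 2 - al * sig * pp) by ring.
    have L : 0 <= sig * (yy + al * yp + (al * yp + al * (al * pp)) - delta ^+ 2)
           - al * (yy + sig * yp + (sig * yp + sig * (sig * pp)) - delta ^+ 2).
      by rewrite h2 subrr mulr0 subr0 mulr_ge0 // subr_ge0.
    have L2 : (sig - al) * (yy - delta ^+ 2 - al * sig * pp) < 0.
      rewrite pmulr_rlt0 ?subr_gt0 //.
      have := mulr_ge0 (mulr_ge0 (ltW al0) sig0) P.
      lra.
    by move: L; rewrite E leNgt L2.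
  have sa : sig * a <= nr by rewrite -(divfK (lt0r_neq0 apos) nr) ler_wpM2r // ltW.
  have h5 : sig ^+ 2 / 2 * a <= sig * nr / 2.
    have -> : sig ^+ 2 / 2 * a = sig * (sig * a) / 2 by rewrite expr2 mulrAC mulrA.
    have := ler_wpM2l sig0 sa; lra.
  have h6 : 0 <= sig * nr := mulr_ge0 sig0 (ltW N).
  have h7 : 0 <= eps / 2 * (yy + sig * yp + (sig * yp + sig * (sig * pp))).
    by rewrite mulr_ge0 ?divr_ge0 ?(ltW eps0).
  lra.
-
  have apos : 0 < dot (p j) (A *m p j).
    move: nneg; rewrite /cg_negc => /negP; rewrite -ltNge => h.
    by apply: le_lt_trans h; rewrite mulr_ge0 ?sqr_ge0 ?ltW.
  have PJ1 : PJ g H eps j.+1.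
    move=> i; rewrite ltnS leq_eqVlt => /orP[/eqP->|ij]; first by split.
    exact: PJj i ij.
  have Q0 := Q_le0 Asym PJ1 (leqnn j.+1).
  split.
    move: nnrm; rewrite /cg_normc => /negP; rewrite -ltNge => lt.
    rewrite (ltW lt) andbT; apply: enorm_gt0; apply/negP => /eqP y0.
    move: res; rewrite /cg_resc y0 enorm0 mulr0 (r_res g H eps j.+1) y0 mulmx0 addr0.
    have : Num.min (enorm g) 0 <= 0 by rewrite ge_min lexx orbT.
    move=> m0 h; have : enorm g <= 0.
      apply: le_trans h _; rewrite mulr_ge0_le0 // divr_ge0 // ltW //.
    by rewrite leNgt (enorm_gt0 g0).
  apply: le_trans Q0 _; rewrite mulr_ge0 ?divr_ge0 ?dot_ge0 // ltW //.
- by [].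
Qed.

End CGok.

Unset Implicit Arguments. Set Strict Implicit.

Set Implicit Arguments. Unset Strict Implicit.
Section Count.
Variables (R : realType).

Lemma card_sum (N : nat) (P : nat -> bool) :
  #|[set k : 'I_N | P k]| = (\sum_(0 <= k < N) P k)%N.
Proof.
rewrite -sum1_card big_mkcond /= big_mkord; apply: eq_bigr => i _.
by rewrite inE; case: (P i).
Qed.

Lemma count_runs (N : nat) (succ : nat -> bool) (d : nat -> R) (gam dmax T : R) (F : int) :
  0 < gam < 1 -> 0 < dmax -> 0 < d 0%N -> d 0%N <= dmax ->
  (forall k, (k < N)%N -> 0 < d k <= dmax -> ~~ succ k -> T < d k) ->
  (forall k, (k < N)%N -> 0 < d k <= dmax -> ~~ succ k -> 0 < d k.+1 <= gam * d k) ->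
  (forall k, (k < N)%N -> 0 < d k <= dmax -> succ k -> 0 < d k.+1 <= dmax) ->
  (forall u : nat, T < gam ^+ u * dmax -> (u.+1)%:Z <= F) ->
  let cU := (\sum_(0 <= k < N) ~~ succ k)%N in
  let cS := (\sum_(0 <= k < N) succ k)%N in
  cU = 0%N \/ (cU%:Z <= F * (cS.+1)%:Z).
Proof.
move=> /andP[g0 g1] dm0 d0 d0m St1 St2 St3 FC /=.
have inv : forall m, (m <= N)%N -> exists u : nat,
   (0 < d m <= gam ^+ u * dmax) /\
   (((\sum_(0 <= k < m) ~~ succ k)%N = 0%N /\ u = 0%N) \/
    ((\sum_(0 <= k < m) ~~ succ k)%N%:Z <= F * (\sum_(0 <= k < m) succ k)%N%:Z + u%:Z
      /\ u%:Z <= F)).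
  elim=> [_|m IH mN].
    exists 0%N; rewrite expr0 mul1r d0 d0m; split=> //; left; split=> //.
    by rewrite big_geq.
  have mN' : (m < N)%N by [].
  have [u [/andP[dm0' dmu] C]] := IH (ltnW mN).
  have gu1 : gam ^+ u <= 1 by rewrite exprn_ile1 // ltW.
  have dmle : d m <= dmax.
    apply: le_trans dmu _; rewrite -[leRHS]mul1r ler_wpM2r // ltW //.
  have dmI : 0 < d m <= dmax by rewrite dm0' dmle.
  rewrite !big_nat_recr //=.
  case sk: (succ m).
  - exists 0%N; rewrite expr0 mul1r; split; first exact: St3.
    case: C => [[-> _]|[C1 C2]]; [left | right]; split=> //.
    rewrite addn0 -[X in _ <= X]addr0 PoszD mulrDr mulr1.
    by rewrite !addr0; apply: le_trans C1 _; rewrite lerD2l.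
    exact: le_trans _ C2.
  - have nsk : ~~ succ m by rewrite sk.
    have Tl := St1 m mN' dmI nsk.
    have [dS0 dSle] := andP (St2 m mN' dmI nsk).
    have Fu : (u.+1)%:Z <= F.
      apply: FC; apply: lt_le_trans Tl dmu.
    exists u.+1; split.
      rewrite dS0 /=; apply: le_trans dSle _.
      by rewrite exprS -mulrA ler_wpM2l // ltW.
    right; split=> //.
    case: C => [[-> ->]|[C1 C2]].
      rewrite addn0 add0n.
      have F0 : 0 <= F by apply: le_trans Fu.
      have : 0 <= F * (\sum_(0 <= k < m) succ k)%N%:Z by rewrite mulr_ge0.
      lia.
    rewrite addn0 PoszD; lia.
have [u [_ [[-> _]|[C1 C2]]]] := inv N (leqnn N); [by left | right].
rewrite -addn1 PoszD mulrDr mulr1.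
by apply: le_trans C1 _; rewrite lerD2l.
Qed.

End Count.

Unset Implicit Arguments. Set Strict Implicit.

Set Implicit Arguments. Unset Strict Implicit.
Local Open Scope classical_set_scope.
Section Main.
Variables (R : realType) (n : nat) (P : params R)
    (f : 'cV[R]_n -> R) (g : 'cV[R]_n -> 'cV[R]_n) (H : 'cV[R]_n -> 'M[R]_n)
    (Lg LH : R) (x : nat -> 'cV[R]_n) (d : nat -> R) (s : nat -> 'cV[R]_n)
    (stop : option nat) (U : set 'cV[R]_n).
Hypothesis VP : valid_params P Lg.
Hypothesis itc : forall k, completed stop k ->
  iter_completes P f g H (x k) (d k) (s k) (x k.+1) (d k.+1).
Hypothesis LH0 : 0 < LH.
Hypothesis oU : open U.
Hypothesis segU : forall k, completed stop k -> forall t : R, 0 <= t <= 1 -> U (x k + t *: s k).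
Hypothesis hf : forall y, U y ->
  differentiable f y /\ (forall v, 'd f y v = dot (g y) v) /\
  differentiable g y /\ (forall v, 'd g y v = H y *m v).
Hypothesis hH : forall y z, U y -> U z -> opnorm_le (H y - H z) (LH * enorm (y - z)).

Lemma step_dec k : completed stop k -> 0 < d k ->
  0 < enorm (s k) <= d k /\
  eps_H P / 4 * enorm (s k) ^+ 2 <= model_decrease (g (x k)) (H (x k)) (s k).
Proof.
move=> ck dk0.
have [eg0 [eH0 [_ [_ [_ [_ [_ [_ [/andP[z0 _] _]]]]]]]]] := VP.
have Ux : U (x k) by have := segU ck (t:=0); rewrite scale0r addr0 lexx ler01 => /(_ isT).
have Hsym := H_sym hf hH oU Ux.
have [[sCG [flag [[cgA cgB] [[uc ->]|[nuc meo]]]]] _] := itc ck.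
- have gk0 : g (x k) != 0.
    apply/negP => /eqP g0; have [_ fl] := cgB g0.
    move: uc; rewrite /use_cg fl g0 enorm0 => -[//|[//|[h _]]].
    by move: h; rewrite ltNge (ltW eg0).
  have nmax : flag <> INTMAX by case: uc => [->|[->|[_ ->]]].
  have [h1 h2] := cg_step_ok gk0 Hsym eH0 dk0 z0 (cgA gk0) nmax.
  split=> //; apply: le_trans h2; rewrite ler_wpM2r ?sqr_ge0 //.
  by rewrite ler_pM2l // lef_pV2 ?posrE // ler_nat.
- have [v [_ [_ [_ [gs [sHs ns]]]]]] := meo.
  rewrite ns dk0 lexx; split=> //.
  rewrite /model_decrease; rewrite ns in sHs; lra.
Qed.

Let T := 3 * (1 - eta_acc P) * eps_H P / (2 * LH).

Lemma step_succ k : completed stop k -> 0 < d k -> enorm (s k) <= T ->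
  eta_acc P <= rho f g H (x k) (s k).
Proof.
move=> ck dk0 sT.
have [eg0 [eH0 [_ [_ [_ [_ [_ [/andP[et0 et1] _]]]]]]]] := VP.
have [/andP[ns0 nsd] md] := step_dec ck dk0.
have tay := taylor_f hf hH (segU ck).
have mdpos : 0 < model_decrease (g (x k)) (H (x k)) (s k).
  apply: lt_le_trans md; rewrite mulr_gt0 ?divr_gt0 ?exprn_gt0 //.
rewrite /rho ler_pdivlMr //.
move: tay md sT; rewrite /model_decrease /T ler_norml => /andP[_ tay] md sT.
set ns := enorm (s k) in tay md sT ns0 *.
have h1 : LH * ns <= 3 * (1 - eta_acc P) * eps_H P / 2.
  by move: sT; rewrite ler_pdivlMr ?mulr_gt0 // => sT; lra.
have h2 : LH * ns ^+ 3 / 6 <= (1 - eta_acc P) * (eps_H P / 4 * ns ^+ 2).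
  have n2 : 0 <= ns ^+ 2 / 6 by rewrite divr_ge0 ?sqr_ge0.
  have := ler_wpM2r n2 h1.
  have -> : LH * ns * (ns ^+ 2 / 6) = LH * ns ^+ 3 / 6 by rewrite !exprS expr0; field.
  have -> : 3 * (1 - eta_acc P) * eps_H P / 2 * (ns ^+ 2 / 6) = (1 - eta_acc P) * (eps_H P / 4 * ns ^+ 2) by field.
  by [].
have h3 : (1 - eta_acc P) * (eps_H P / 4 * ns ^+ 2) <= (1 - eta_acc P) * (- (dot (g (x k)) (s k) + 1 / 2 * dot (s k) (H (x k) *m s k))).
  by rewrite ler_wpM2l // subr_ge0 ltW.
lra.
Qed.

End Main.

Section Main2.
Variables (R : realType) (n : nat) (P : params R)
    (f : 'cV[R]_n -> R) (g : 'cV[R]_n -> 'cV[R]_n) (H : 'cV[R]_n -> 'M[R]_n)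
    (Lg LH : R) (x : nat -> 'cV[R]_n) (d : nat -> R) (s : nat -> 'cV[R]_n)
    (stop : option nat) (U : set 'cV[R]_n).
Hypothesis VP : valid_params P Lg.
Hypothesis itc : forall k, completed stop k ->
  iter_completes P f g H (x k) (d k) (s k) (x k.+1) (d k.+1).
Hypothesis LH0 : 0 < LH.
Hypothesis oU : open U.
Hypothesis segU : forall k, completed stop k -> forall t : R, 0 <= t <= 1 -> U (x k + t *: s k).
Hypothesis hf : forall y, U y ->
  differentiable f y /\ (forall v, 'd f y v = dot (g y) v) /\
  differentiable g y /\ (forall v, 'd g y v = H y *m v).
Hypothesis hH : forall y z, U y -> U z -> opnorm_le (H y - H z) (LH * enorm (y - z)).

Lemma step_d k : completed stop k -> 0 < d k <= delta_max P ->
  (eta_acc P <= rho f g H (x k) (s k) -> 0 < d k.+1 <= delta_max P) /\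
  (rho f g H (x k) (s k) < eta_acc P -> 0 < d k.+1 <= gamma1 P * d k).
Proof.
move=> ck /andP[dk0 dkm].
have [eg0 [eH0 [/andP[g10 g11] [g21 [_ [dd0 [d0m _]]]]]]] := VP.
have [/andP[ns0 nsd] _] := step_dec VP itc oU segU hf hH ck dk0.
have [_ [c2 c3]] := itc ck.
split=> [/c2 [_ ->]|/c3 [_ ->]].
  case: ifP => _; last by rewrite dk0.
  rewrite ge_min lexx orbT andbT lt_min (lt_le_trans dd0 d0m) andbT.
  by rewrite mulr_gt0 // (lt_le_trans ltr01).
by rewrite mulr_gt0 //= ler_wpM2l // ltW.
Qed.

End Main2.

Local Close Scope classical_set_scope.
Unset Implicit Arguments. Set Strict Implicit.

Theorem lemma4p5 (R : realType) (n : nat) (P : params R)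
    (f : 'cV[R]_n -> R) (g : 'cV[R]_n -> 'cV[R]_n) (H : 'cV[R]_n -> 'M[R]_n)
    (Lg LH : R) (x0 : 'cV[R]_n)
    (x : nat -> 'cV[R]_n) (d : nat -> R) (s : nat -> 'cV[R]_n) (stop : option nat) :
  valid_params P Lg ->
  alg4_run P f g H x0 x d s stop ->
  standing_assumption f g H x s stop Lg LH ->
  forall N : nat, (forall k : nat, (k < N)%N -> completed stop k) ->
  let nU := #|[set k : 'I_N | rho f g H (x k) (s k) < eta_acc P]| in
  let nS := #|[set k : 'I_N | eta_acc P <= rho f g H (x k) (s k)]| in
  nU = 0%N \/
  (nU%:Z <= Num.floor (1 + logb (gamma1 P) (3 * (1 - eta_acc P) / (2 * LH * delta_max P))
                        + logb (gamma1 P) (eps_H P)) * (nS.+1)%:Z)%R.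
Proof.
move=> VP [x0e [d0e [itc _]]] [Lg0 [LH0 [_ [U [oU [segU [smooth [_ hHU]]]]]]]] N compN nU nS.
have hf : forall y, U y ->
  differentiable f y /\ (forall v, 'd f y v = dot (g y) v) /\
  differentiable g y /\ (forall v, 'd g y v = H y *m v).
  by move=> y /smooth [a [b [c [e _]]]].
have [eg0 [eH0 [/andP[g10 g11] [g21 [_ [dd0 [d0m [/andP[et0 et1] _]]]]]]]] := VP.
have dm0 : 0 < delta_max P by exact: lt_le_trans dd0 d0m.
pose T := 3 * (1 - eta_acc P) * eps_H P / (2 * LH).
have T0 : 0 < T by rewrite divr_gt0 ?mulr_gt0 // subr_gt0.
pose succ k := eta_acc P <= rho f g H (x k) (s k).
have -> : nU = (\sum_(0 <= k < N) ~~ succ k)%N.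
  rewrite /nU (card_sum N (fun k => rho f g H (x k) (s k) < eta_acc P)); apply: eq_bigr => i _; by rewrite /succ ltNge.
have -> : nS = (\sum_(0 <= k < N) succ k)%N by rewrite /nS (card_sum N succ).
apply: (@count_runs R N succ d (gamma1 P) (delta_max P) T).
- by rewrite g10 g11.
- exact: dm0.
- by rewrite d0e.
- by rewrite d0e.
- move=> k kN dkI nsk; rewrite ltNge; apply/negP => dT.
  case/andP: dkI => dk0 _.
  have [/andP[_ nsd] _] := step_dec VP itc oU segU hf hHU (compN k kN) dk0.
  move/negP: nsk; apply.
  by have := step_succ VP itc LH0 oU segU hf hHU (compN k kN) dk0 (le_trans nsd dT).
- move=> k kN dkI nsk; have [_ h] := step_d VP itc oU segU hf hHU (compN k kN) dkI.
  by apply: h; rewrite ltNge.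
- move=> k kN dkI sk; have [h _] := step_d VP itc oU segU hf hHU (compN k kN) dkI.
  exact: h.
- move=> u Tu.
  rewrite floor_ge_int.
  have lg : ln (gamma1 P) < 0 by apply: ln_lt0; rewrite g10 g11.
  have a0 : 0 < 3 * (1 - eta_acc P) / (2 * LH * delta_max P).
    by rewrite divr_gt0 ?mulr_gt0 // subr_gt0.
  have E : logb (gamma1 P) (3 * (1 - eta_acc P) / (2 * LH * delta_max P))
           + logb (gamma1 P) (eps_H P) = ln (T / delta_max P) / ln (gamma1 P).
    rewrite /logb -mulrDl -lnM ?posrE //; congr (ln _ / _); rewrite /T.
    by field; rewrite !gt_eqF.
  have key : u%:R < ln (T / delta_max P) / ln (gamma1 P).
    rewrite ltr_ndivlMr // mulr_natl -lnXn //.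
    have Tpos : 0 < T / delta_max P := divr_gt0 T0 dm0.
    have gpos := exprn_gt0 u g10.
    rewrite ltr_ln ?posrE //.
    by rewrite ltr_pdivrMr.
  rewrite -addrA E.
  have -> : (u.+1%:~R : R) = u%:R + 1 by rewrite natr1.
  by rewrite addrC lerD2r; exact: ltW.
Qed.
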